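(* Let $L\ge1$, $\sigma_1,\dots,\sigma_L\in\mathfrak S_{2k}$, $\varepsilon_1,\dots,\varepsilon_L\in\{1,*\}$, let $T=T^{\varepsilon_1,\dots,\varepsilon_L}_{\sigma_1,\dots,\sigma_L}$ be the strip hypergraph and let $\pi$ be any partition of its vertex set $V$. Then $q(\pi,0)\le0$ and the sequence $(q(\pi,\ell))_{\ell=0,\dots,L}$ is non-increasing. In particular $-k-k|\bar E^\pi|+|V^\pi|=q(\pi,L)\le0$, where $(V^\pi,\bar E^\pi)$ is the skeleton of $T^\pi$.
   Context: Fix $k\ge1$; $\mathfrak S_{2k}$ is the symmetric group on $\{1,\dots,2k\}$. A $*$-test hypergraph $(V,E,\sigma,\varepsilon)$ consists of a finite vertex set $V$, a finite multiset $E$ of hyperedges $e=(v_1,\dots,v_{2k})\in V^{2k}$ (the first $k$ entries are the inputs, the last $k$ the outputs), and labels $\sigma(e)\in\mathfrak S_{2k}$, $\varepsilon(e)\in\{1,*\}$. Strip hypergraph $T=T^{\varepsilon_1,\dots,\varepsilon_L}_{\sigma_1,\dots,\sigma_L}$: $V=\{(i,\ell):i\in[k],\ell\in[L]\}$, hyperedges $e_\ell=((1,\ell+1),\dots,(k,\ell+1),(1,\ell),\dots,(k,\ell))$ for $\ell\in[L]$ (each with multiplicity one), with the convention $(i,L+1)=(i,1)$, labels $\sigma(e_\ell)=\sigma_\ell$, $\varepsilon(e_\ell)=\varepsilon_\ell$. For $0\le\ell\le L-1$, $S_\ell$ is the hypergraph with vertex set $V_\ell=\{(i,j):i\in[k],j\in[\ell+1]\}$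 and hyperedges $e_1,\dots,e_\ell$; $S_L=T$. A partition $\pi$ of $V$ induces (by restriction) a partition of each $V_\ell$ and thus a quotient $S_\ell^\pi$: its vertices are the blocks of the restricted partition, and each hyperedge $(v_1,\dots,v_{2k})$ becomes $(B_1,\dots,B_{2k})$ with $v_s\in B_s$. The skeleton of a quotient with vertex set $V^\pi_\ell$ and hyperedges $E^\pi_\ell$ is the pair $(V^\pi_\ell,\bar E^\pi_\ell)$, where $\bar E^\pi_\ell$ is the set (without multiplicity) of the underlying vertex sets $\{B_1,\dots,B_{2k}\}$ of the hyperedges $(B_1,\dots,B_{2k})\in E^\pi_\ell$. Define $q(\pi,\ell)=-k-k|\bar E^\pi_\ell|+|V^\pi_\ell|$ for $\ell=0,\dots,L$. *)

(* Defs.v *)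
From HB Require Import structures.
From mathcomp Require Import all_boot all_order all_algebra all_fingroup.
Set Implicit Arguments. Unset Strict Implicit. Unset Printing Implicit Defensive.
Import GRing.Theory Num.Theory.

(* A *-test hypergraph with vertices in a finite type V: a vertex set and a
   (multi)list of hyperedges; a hyperedge is a map 'I_(k+k) -> V (first k
   entries inputs, last k outputs) with labels sigma in 'S_(k+k) and
   epsilon : bool  (true stands for "*", false for "1"). *)
Record thyp (V : finType) (k : nat) := THyp {
  hverts : {set V};
  hedges : seq ({ffun 'I_(k + k) -> V} * ('S_(k + k) * bool)) }.

Definition restrict (V : finType) (P : {set {set V}}) (A : {set V})
  : {set {set V}} := [set B :&: A | B in P] :\ set0.

Definition skel_verts V k (H : thyp V k) (P : {set {set V}}) :=
  restrict P (hverts H).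

Definition skel_edges V k (H : thyp V k) (P : {set {set V}})
  : {set {set {set V}}} :=
  [set [set pblock (skel_verts H P) (e.1 s) | s : 'I_(k + k)]
     | e : {ffun 'I_(k + k) -> V} * ('S_(k + k) * bool) in hedges H].

Definition qval V k (H : thyp V k) (P : {set {set V}}) : int :=
  (- (k%:Z) - (k * #|skel_edges H P|)%N%:Z + (#|skel_verts H P|)%:Z)%R.

(* Strip hypergraph, 0-indexed: vertex (i,l) : ('I_k * 'I_L)%type stands for (i+1,l+1).
   Hyperedge e_(j+1) (j : 'I_L) is ((i, j+1 mod L))_i followed by ((i, j))_i. *)
Definition strip_edge k L (j : 'I_L) : {ffun 'I_(k + k) -> ('I_k * 'I_L)%type} :=
  [ffun s => match split s with
             | inl i => (i, ordS j)
             | inr i => (i, j)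
             end].

(* S_l: vertices (i,j) with j in [l+1] (1-indexed), hyperedges e_1..e_l;
   for l >= L-1 the vertex set is all of V, and S_L = T. *)
Definition strip_S k L (sigma : 'I_L -> 'S_(k + k)) (eps : 'I_L -> bool)
  (l : nat) : thyp (('I_k * 'I_L)%type) k :=
  THyp [set v : ('I_k * 'I_L)%type | (v.2 : nat) <= l]
       [seq (strip_edge k j, (sigma j, eps j)) | j <- [seq j <- enum 'I_L | (val j < l)%N]].

Definition q k L sigma eps (P : {set {set ('I_k * 'I_L)%type}}) (l : nat) : int :=
  qval (@strip_S k L sigma eps l) P.

(* Main.v *)
Require Import Defs.
From mathcomp Require Import all_boot all_order all_algebra all_fingroup zify.
Import GRing.Theory Num.Theory.
Set Implicit Arguments. Unset Strict Implicit. Unset Printing Implicit Defensive.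

Module Aux.

Section Gen.
Variable V : finType.
Variable P : {set {set V}}.
Hypothesis hP : partition P [set: V].

Lemma covP x : x \in cover P.
Proof. by case/and3P: hP => /eqP -> _ _; rewrite inE. Qed.
Lemma tIP : trivIset P.
Proof. by case/and3P: hP. Qed.

Lemma restrictE (A : {set V}) : restrict P A = [set pblock P x :&: A | x in A].
Proof.
apply/setP=> C; apply/idP/idP.
- rewrite !inE => /andP[C0 /imsetP[B BP CE]].
  case/set0Pn: C0 => x; rewrite CE inE => /andP[xB xA].
  apply/imsetP; exists x => //; by rewrite (def_pblock tIP BP xB).
- case/imsetP=> x xA ->; rewrite !inE; apply/andP; split.
  + apply/set0Pn; exists x; by rewrite inE mem_pblock covP xA.
  + apply/imsetP; exists (pblock P x) => //; exact: pblock_mem (covP x).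
Qed.

Lemma tI_restrict (A : {set V}) : trivIset (restrict P A).
Proof.
apply/trivIsetP => C1 C2; rewrite restrictE.
case/imsetP=> x1 _ -> /imsetP[x2 _ ->] ne.
have ne' : pblock P x1 != pblock P x2.
  by apply: contraNneq ne => ->.
move/trivIsetP: tIP => tI.
have := tI _ _ (pblock_mem (covP x1)) (pblock_mem (covP x2)) ne'.
move=> dj; apply: (disjointWl (subsetIl _ A)).
rewrite disjoint_sym; apply: (disjointWl (subsetIl _ A)); by rewrite disjoint_sym.
Qed.

Lemma pblock_restrict (A : {set V}) (x : V) : x \in A -> pblock (restrict P A) x = pblock P x :&: A.
Proof.
move=> xA; apply: def_pblock; first exact: tI_restrict.
  rewrite restrictE; by apply/imsetP; exists x.
by rewrite inE mem_pblock covP xA.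
Qed.

Definition fA (A : {set V}) (B : {set V}) := B :&: A.

Lemma fA_inj (A : {set V}) : {in pblock P @: A &, injective (fA A)}.
Proof.
move=> B1 B2 /imsetP[x1 x1A ->] /imsetP[x2 x2A ->]; rewrite /fA => E.
have : x1 \in pblock P x2 :&: A by rewrite -E inE mem_pblock covP x1A.
rewrite inE => /andP[h _].
by rewrite (def_pblock tIP (pblock_mem (covP x2)) h).
Qed.

Lemma card_restrict (A : {set V}) : #|restrict P A| = #|pblock P @: A|.
Proof.
rewrite restrictE -(card_in_imset (@fA_inj A)) -imset_comp; done.
Qed.

Lemma imset_inj_sub (T U : finType) (f : T -> U) (D X Y : {set T}) :
  {in D &, injective f} -> X \subset D -> Y \subset D -> f @: X = f @: Y -> X = Y.
Proof.
move=> inj sX sY E.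
have H : forall X Y : {set T}, X \subset D -> Y \subset D -> f @: X = f @: Y -> X \subset Y.
  move=> X1 Y1 sX1 sY1 E1; apply/subsetP => z zX.
  have : f z \in f @: Y1 by rewrite -E1; apply/imsetP; exists z.
  case/imsetP => z' z'Y fz.
  by rewrite (inj z z' (subsetP sX1 _ zX) (subsetP sY1 _ z'Y) fz).
by apply/eqP; rewrite eqEsubset (H X Y) // (H Y X).
Qed.

Lemma card_skel_edges k (H : thyp V k) :
  (forall (e : {ffun 'I_(k + k) -> V} * ('S_(k + k) * bool)), e \in hedges H -> forall s, e.1 s \in hverts H) ->
  #|skel_edges H P| = #|[set [set pblock P (e.1 s) | s : 'I_(k+k)] | e : ({ffun 'I_(k + k) -> V} * ('S_(k + k) * bool))%type in hedges H]|.
Proof.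
move=> Hin; set A := hverts H.
set E' := [set _ | e in hedges H].
have -> : skel_edges H P = (fun Xs : {set {set V}} => fA A @: Xs) @: E'.
  rewrite /skel_edges /E' -imset_comp; apply: eq_in_imset => e eH /=.
  rewrite -imset_comp; apply: eq_imset => s /=.
  by rewrite /skel_verts pblock_restrict // Hin.
apply: card_in_imset => X Y /imsetP[e1 e1H ->] /imsetP[e2 e2H ->].
apply: (imset_inj_sub (@fA_inj A)); apply/subsetP => Z /imsetP[s _ ->];
  by apply: imset_f; apply: Hin.
Qed.

End Gen.


Section Strip.
Variables (k L : nat) (hk : (0 < k)%N) (hL : (0 < L)%N)
  (sigma : 'I_L -> 'S_(k + k)) (eps : 'I_L -> bool)
  (P : {set {set ('I_k * 'I_L)%type}}) (hP : partition P [set: ('I_k * 'I_L)%type]).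

Local Notation T := ('I_k * 'I_L)%type.
Local Notation ET := ({ffun 'I_(k + k) -> T} * ('S_(k + k) * bool))%type.

Definition X (j : 'I_L) := [set pblock P (strip_edge k j s) | s : 'I_(k+k)].
Definition E' (l : nat) := X @: [set j : 'I_L | (val j < l)%N].
Definition D (l : nat) := pblock P @: [set v : T | (val v.2 <= l)%N].

Lemma edge_in l (j : 'I_L) s : (j < l)%N -> strip_edge k j s \in [set v : T | (val v.2 <= l)%N].
Proof.
move=> jl; rewrite ffunE inE; case: split => i /=.
- by rewrite (leq_trans (leq_mod _ _)).
- exact: ltnW.
Qed.

Lemma hedgesE l :
  [set [set pblock P (e.1 s) | s : 'I_(k+k)] | e : ET in hedges (strip_S sigma eps l)] = E' l.
Proof.
apply/setP => Z; apply/imsetP/imsetP.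
- case=> e /mapP[j jin ->] ->; exists j => //.
  by move: jin; rewrite mem_filter mem_enum andbT inE.
- case=> j; rewrite inE => jl ->; exists (strip_edge k j, (sigma j, eps j)) => //.
  apply/mapP; exists j => //; by rewrite mem_filter mem_enum andbT.
Qed.

Lemma qE l : q sigma eps P l = (- k%:Z - (k * #|E' l|)%N%:Z + #|D l|%:Z)%R.
Proof.
rewrite /q /qval (card_skel_edges hP); last first.
  move=> e /mapP[j jin ->] s /=; apply: edge_in.
  by move: jin; rewrite mem_filter mem_enum andbT.
by rewrite hedgesE /skel_verts (card_restrict hP).
Qed.


Lemma step l (hl : (l < L)%N) :
  (k * #|E' l| + #|D l.+1| <= k * #|E' l.+1| + #|D l|)%N.
Proof.
pose l' := Ordinal hl.
have EU : E' l.+1 = X l' |: E' l.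
  rewrite /E' -imsetU1.
  have -> : [set j : 'I_L | (val j < l.+1)%N] = l' |: [set j : 'I_L | (val j < l)%N] => //.
  by apply/setP => j; rewrite !inE ltnS leq_eqVlt -val_eqE.
pose In := [set (i, ordS l') | i : 'I_k].
pose N := (pblock P @: In) :\: D l.
have DS : D l.+1 \subset D l :|: N.
  apply/subsetP => B /imsetP[v]; rewrite inE => vl ->.
  case: (leqP (val v.2) l) => h.
    by rewrite inE; apply/orP; left; apply: imset_f; rewrite inE.
  have v2 : val v.2 = l.+1 by apply/eqP; rewrite eqn_leq vl h.
  have vE : v = (v.1, ordS l').
    move: v v2 vl h => [i j] /= v2 _ _; congr (_,_); apply/val_inj.
    by rewrite /= v2 modn_small // -v2.
  rewrite inE; case: (boolP (pblock P v \in D l)) => //= nin.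
  rewrite inE nin /= {1}vE; apply: imset_f; apply/imsetP; by exists v.1.
have cardD : (#|D l.+1| <= #|D l| + #|N|)%N.
  apply: leq_trans (subset_leq_card DS) _; by case: (leq_card_setU (D l) N).
have cardN : (#|N| <= k)%N.
  apply: leq_trans (subset_leq_card (subsetDl _ _)) _.
  apply: leq_trans (leq_imset_card _ _) _.
  apply: leq_trans (leq_imset_card _ _) _.
  by rewrite card_ord.
case: (set_0Vmem N) => [N0 | [Z ZN]].
  rewrite N0 cards0 addn0 in cardD.
  have : (#|E' l| <= #|E' l.+1|)%N by rewrite EU; apply: subset_leq_card; apply: subsetUr.
  move=> h; apply: leq_add => //; by rewrite leq_mul2l h orbT.
have nin : X l' \notin E' l.
  apply/imsetP => -[j]; rewrite inE => jl XE.
  move: ZN; rewrite inE => /andP[ZD ZI]; apply: (negP ZD).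
  have : Z \in X j.
    rewrite -XE; case/imsetP: ZI => v /imsetP[i _ ->] ->.
    apply/imsetP; exists (lshift k i) => //.
    by rewrite ffunE (unsplitK (@inl 'I_k 'I_k i)).
  case/imsetP => s _ ->; apply: imset_f; exact: edge_in.
rewrite EU cardsU1 nin /= mulnDr muln1.
rewrite [k + _]addnC -addnA leq_add2l; apply: leq_trans cardD _; by rewrite addnC leq_add2r.
Qed.

End Strip.

End Aux.
Import Aux.
Import Order.TTheory.
Unset Implicit Arguments.
Local Open Scope ring_scope.

Theorem mainTheorem16 (k L : nat) (hk : (0 < k)%N) (hL : (0 < L)%N)
  (sigma : 'I_L -> 'S_(k + k)) (eps : 'I_L -> bool)
  (P : {set {set ('I_k * 'I_L)%type}}) (hP : partition P [set: ('I_k * 'I_L)%type]) :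
  q sigma eps P 0 <= 0 /\
  (forall l : nat, (l < L)%N -> q sigma eps P l.+1 <= q sigma eps P l) /\
  q sigma eps P L <= 0.
Proof.
have q0 : q sigma eps P 0 <= 0.
  rewrite (qE sigma eps hP).
  have -> : #|E' P 0| = 0%N.
    rewrite /E'; have -> : [set j : 'I_L | (val j < 0)%N] = set0.
      by apply/setP => j; rewrite !inE.
    by rewrite imset0 cards0.
  have : (#|D P 0| <= k)%N.
    pose j0 := Ordinal hL.
    apply: leq_trans (leq_imset_card _ _) _.
    apply: (@leq_trans #|[set (i, j0) | i : 'I_k]|).
      apply: subset_leq_card; apply/subsetP => -[i j]; rewrite inE /= leqn0 => /eqP j0E.
      apply/imsetP; exists i => //; congr (_,_); exact: val_inj.
    by apply: leq_trans (leq_imset_card _ _) _; rewrite card_ord.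
  lia.
have st : forall l : nat, (l < L)%N -> q sigma eps P l.+1 <= q sigma eps P l.
  move=> l hl; rewrite !(qE sigma eps hP); have := step P hl; lia.
split => //; split => //.
suff : forall l, (l <= L)%N -> q sigma eps P l <= q sigma eps P 0.
  by move=> /(_ L (leqnn L)) h; apply: le_trans h q0.
elim => [//|l IH] hl; apply: le_trans (st l hl) (IH (ltnW hl)).
Qed.
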